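(* $\mathcal{I}_{\mathrm{id}}\subsetneq\mathrm{HDZ}$; that is, every set in the Yorioka ideal $\mathcal{I}_{\mathrm{id}}$ has Hausdorff dimension $0$, and there is a subset of $2^\omega$ of Hausdorff dimension $0$ not belonging to $\mathcal{I}_{\mathrm{id}}$.
   Context: $2^\omega$ carries the metric $d(x,y)=2^{-\min\{n:x(n)\neq y(n)\}}$ for $x\neq y$ and $d(x,x)=0$. For $A\subseteq 2^\omega$, $s>0$: $\mathcal{H}^s(A)=\lim_{\delta\to0}\inf\{\sum_n(\operatorname{diam}C_n)^s:A\subseteq\bigcup_nC_n,\ \operatorname{diam}C_n\le\delta\}$, $\dim_H(A)=\inf\{s>0:\mathcal{H}^s(A)=0\}$, and $\mathrm{HDZ}=\{A\subseteq2^\omega:\dim_H(A)=0\}$. For $\sigma\in(2^{<\omega})^\omega$, let $(\operatorname{ht}\sigma)(n)=|\sigma(n)|$ and $[\sigma]_\infty=\{x\in2^\omega:\exists^\infty n\ \sigma(n)\subseteq x\}$. For $g\in\omega^\omega$, $\mathcal{J}_g=\{A\subseteq2^\omega:\exists\sigma\in(2^{<\omega})^\omega\,(\operatorname{ht}\sigma=g\wedge A\subseteq[\sigma]_\infty)\}$. For $f,g\in\omega^\omega$, $f\ll g$ iff for every $k\in\omega$, $f(n^k)\le g(n)$ for all but finitely many $n$. For increasing $f\in\omega^\omega$, the Yorioka ideal is $\mathcal{I}_f=\bigcup_{g\gg f}\mathcal{J}_g$; $\mathrm{id}$ is the identity function on $\omega$. *)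

(* Defs.v *)
From HB Require Import structures.
From mathcomp Require Import all_boot all_order all_algebra.
From mathcomp Require Import all_classical all_reals all_analysis.
Set Implicit Arguments. Unset Strict Implicit. Unset Printing Implicit Defensive.
Import Order.TTheory GRing.Theory Num.Theory.
Local Open Scope classical_set_scope.
Local Open Scope ring_scope.

Definition cantor := nat -> bool.

Section Hausdorff.
Variable R : realType.

Definition cantor_dist (x y : cantor) : R :=
  match pselect (exists n, x n != y n) with
  | left h => 2 ^- (ex_minn h)
  | right _ => 0
  end.

(* diameter (sup of the distances; 0 for the empty set) *)
Definition diam (C : set cantor) : R :=
  sup [set cantor_dist x y | x in C & y in C].

Definition hmeas_delta (s delta : R) (A : set cantor) : \bar R :=
  ereal_inf [set (\sum_(n <oo) ((diam (C n)) `^ s)%:E)%E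
            | C in [set C : nat -> set cantor |
                      A `<=` \bigcup_n C n /\ forall n, diam (C n) <= delta]].

(* H^s(A) = lim_{delta -> 0+} H^s_delta(A); as H^s_delta is nonincreasing in
   delta, this limit is the supremum over delta > 0. *)
Definition hmeas (s : R) (A : set cantor) : \bar R :=
  ereal_sup [set hmeas_delta s delta A | delta in [set delta : R | 0 < delta]].

Definition hdim (A : set cantor) : \bar R :=
  ereal_inf [set s%:E | s in [set s : R | 0 < s /\ hmeas s A = 0%E]].

Definition HDZ (A : set cantor) : Prop := hdim A = 0%E.

End Hausdorff.

Definition is_prefix (t : seq bool) (x : cantor) : Prop :=
  forall i, (i < size t)%N -> x i = nth false t i.

Definition inf_often (sigma : nat -> seq bool) : set cantor :=
  [set x | forall m, exists2 n, (m <= n)%N & is_prefix (sigma n) x].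

Definition J_ideal (g : nat -> nat) (A : set cantor) : Prop :=
  exists sigma : nat -> seq bool,
    (forall n, size (sigma n) = g n) /\ A `<=` inf_often sigma.

Definition much_less (f g : nat -> nat) : Prop :=
  forall k, exists N, forall n, (N <= n)%N -> (f (n ^ k) <= g n)%N.

Definition Yorioka (f : nat -> nat) (A : set cantor) : Prop :=
  exists g, much_less f g /\ J_ideal g A.

(* Main.v *)
Require Import Defs.
From mathcomp Require Import all_boot all_order all_algebra.
From mathcomp Require Import all_classical all_reals all_analysis.
From mathcomp Require Import zify.
Import Order.TTheory GRing.Theory Num.Theory.
Local Open Scope classical_set_scope.
Local Open Scope ring_scope.

Lemma dist_ge0 (R : realType) x y : 0 <= cantor_dist R x y.
Proof. by rewrite /cantor_dist; case: pselect => // h; rewrite invr_ge0 exprn_ge0. Qed.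

Lemma dist_le (R : realType) x y L :
  (forall i, (i < L)%N -> x i = y i) -> cantor_dist R x y <= 2 ^- L.
Proof.
move=> H; rewrite /cantor_dist; case: pselect => h; last by rewrite invr_ge0 exprn_ge0.
case: ex_minnP => n /eqP xy _.
have Ln : (L <= n)%N by rewrite leqNgt; apply/negP => /H.
rewrite -!exprVn; apply: ler_wiXn2l => //; rewrite ?invr_ge0 ?invf_le1 ?ler1n //.
Qed.

Lemma dist_le1 (R : realType) x y : cantor_dist R x y <= 1.
Proof. by have := @dist_le R x y 0; rewrite expr0 invr1; apply. Qed.
Lemma diam_ge0 (R : realType) (C : set cantor) : 0 <= diam R C.
Proof.
rewrite /diam; set S := [set _ | _ in _ & _ in _].
have [[z Sz]|e] := pselect (S !=set0); last first.
  rewrite (_ : S = set0) ?sup0 //; apply/funext => z; apply/propext; split => // Hz.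
  by apply: e; exists z.
have hs : has_sup S.
  split; first by exists z.
  by exists 1 => w [a _ [b _ <-]]; apply: dist_le1.
apply: le_trans (sup_upper_bound hs Sz).
by case: Sz => a _ [b _ <-]; apply: dist_ge0.
Qed.

Lemma diam_le (R : realType) (C : set cantor) L :
  (forall x y, C x -> C y -> forall i, (i < L)%N -> x i = y i) ->
  diam R C <= 2 ^- L.
Proof.
move=> H; rewrite /diam; set S := [set _ | _ in _ & _ in _].
have [ne|e] := pselect (S !=set0); last first.
  rewrite (_ : S = set0) ?sup0 ?invr_ge0 ?exprn_ge0 //.
  apply/funext => z; apply/propext; split => // Hz.
  by apply: e; exists z.
apply: ge_sup => // w [a Ca [b Cb <-]]; apply: dist_le; exact: H.
Qed.
Lemma powRX (R : realType) (a s : R) n : 0 <= a -> (a ^+ n) `^ s = (a `^ s) ^+ n.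
Proof.
move=> a0; rewrite -powR_mulrn // -powRrM mulrC powRrM powR_mulrn //.
exact: powR_ge0.
Qed.

Definition rr {R : realType} (s : R) : R := (2^-1) `^ s.

Lemma rr_ge0 (R : realType) (s : R) : 0 <= rr s.
Proof. exact: powR_ge0. Qed.

Lemma rr_lt1 (R : realType) (s : R) : 0 < s -> rr s < 1.
Proof.
move=> s0; have -> : (1:R) = 1 `^ s by rewrite powR1.
rewrite /rr; apply: gt0_ltr_powR => //; rewrite ?nnegrE //.
by rewrite invf_lt1 // ltr1n.
Qed.

Lemma powdiam_le (R : realType) (s : R) (C : set cantor) L : 0 < s ->
  (forall x y, C x -> C y -> forall i, (i < L)%N -> x i = y i) ->
  (diam R C) `^ s <= (rr s) ^+ L.
Proof.
move=> s0 H; rewrite /rr -powRX // exprVn.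
apply: (ge0_ler_powR (ltW s0)); rewrite ?nnegrE ?diam_ge0 ?invr_ge0 ?exprn_ge0 //.
exact: diam_le.
Qed.

Lemma small (R : realType) (q c : R) : 0 <= q -> q < 1 -> 0 < c ->
  exists N, forall m, (N <= m)%N -> q ^+ m <= c.
Proof.
move=> q0 q1 c0.
have := cvg_expr (z:=q); rewrite ger0_norm // => /(_ q1) /cvgr_dist_lt /(_ _ c0) [N _ HN].
exists N => m Nm; have := HN m Nm; rewrite /= sub0r normrN ger0_norm ?exprn_ge0 // => h.
exact: ltW.
Qed.
Local Open Scope ereal_scope.

Lemma hmeas0 (R : realType) (s : R) (A : set cantor) :
  (forall delta : R, (0 < delta)%R -> forall eps : R, (0 < eps)%R ->
     exists C : nat -> set cantor, A `<=` \bigcup_n C n /\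
       (forall n, (diam R (C n) <= delta)%R) /\
       \sum_(n <oo) ((diam R (C n)) `^ s)%:E <= eps%:E) ->
  hmeas s A = 0.
Proof.
move=> H.
have hd : forall delta : R, (0 < delta)%R -> hmeas_delta s delta A = 0.
  move=> delta d0; apply/eqP; rewrite eq_le; apply/andP; split.
    apply/lee_addgt0Pr => e e0; rewrite add0e.
    have [C [AC [Cd Cs]]] := H delta d0 e e0.
    by apply: ge_ereal_inf; exists (\sum_(n <oo) ((diam R (C n)) `^ s)%:E) => //; exists C.
  apply: le_ereal_inf_tmp => x [C _ <-].
  by apply: nneseries_ge0 => n _ _; rewrite lee_fin powR_ge0.
apply/eqP; rewrite eq_le; apply/andP; split.
  by apply: ge_ereal_sup => x [d d0 <-]; rewrite (hd d d0).
rewrite -(hd 1%R ltr01); apply: ereal_sup_ubound; exists 1%R => //; exact: ltr01.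
Qed.

Lemma HDZ_of (R : realType) (A : set cantor) :
  (forall s : R, (0 < s)%R -> hmeas s A = 0) -> HDZ R A.
Proof.
move=> H; rewrite /HDZ /hdim; apply/eqP; rewrite eq_le; apply/andP; split.
  apply/lee_addgt0Pr => e e0; rewrite add0e.
  by apply: ge_ereal_inf; exists e%:E => //; exists e => //; split => //; apply: H.
apply: le_ereal_inf_tmp => x [s [s0 _] <-]; rewrite lee_fin; exact: ltW.
Qed.
Lemma geom_sum_le (R : realType) (s : R) m (F : nat -> R) : (0 < s)%R ->
  (forall n, 0 <= F n <= (rr s ^+ (n + m)))%R ->
  \sum_(n <oo) (F n)%:E <= (rr s ^+ m / (1 - rr s))%:E.
Proof.
move=> s0 HF.
have r0 : (0 < rr s)%R by rewrite /rr powR_gt0 // invr_gt0.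
have r1 := @rr_lt1 R s s0.
apply: lime_le; first by apply: is_cvg_nneseries => n _ _; rewrite lee_fin; case/andP: (HF n).
apply: nearW => k; rewrite sumEFin lee_fin.
apply: le_trans (geometric_le_lim k (exprn_ge0 m (ltW r0)) r0 _); last by rewrite ger0_norm // ltW.
rewrite seriesEnat /=; apply: ler_sum => i _.
by case/andP: (HF i) => _; rewrite exprD mulrC.
Qed.

Lemma part1 (R : realType) (A : set cantor) : Yorioka id A -> HDZ R A.
Proof.
move=> [g [hg [sg [Hsize HA]]]].
have [N0 HN0] := hg 1%N.
apply: HDZ_of => s s0; apply: hmeas0 => delta d0 eps e0.
have r0 : (0 < rr s)%R by rewrite /rr powR_gt0 // invr_gt0.
have r1 := @rr_lt1 R s s0.
have h20 : (0 <= (2:R)^-1)%R by rewrite invr_ge0.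
have h21 : ((2:R)^-1 < 1)%R by rewrite invf_lt1 // ltr1n.
have [N1 HN1] := @small R _ _ h20 h21 d0.
have e1 : (0 < eps * (1 - rr s))%R by rewrite mulr_gt0 // subr_gt0.
have [N2 HN2] := @small R _ _ (ltW r0) r1 e1.
pose m := maxn N0 (maxn N1 N2).
exists (fun n => [set x | is_prefix (sg (n + m)%N) x]); split; last split.
- move=> x /HA /(_ m) [n mn px]; exists (n - m)%N => //=; by rewrite subnK.
- move=> n; apply: le_trans (@diam_le R _ (n + m)%N _) _.
  + move=> x y px py i iL.
    have iS : (i < size (sg (n + m)%N))%N.
      rewrite Hsize; have := HN0 (n + m)%N; rewrite expn1 /m => h; apply: leq_trans iL (h _); lia.
    by rewrite px ?py.
  + rewrite -(@exprVn R 2); apply: le_trans (HN1 m _); last by rewrite /m; lia.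
    apply: ler_wiXn2l => //; [exact: ltW | exact: leq_addl].
- apply: le_trans (@geom_sum_le R s m _ s0 _) _.
    move=> n; rewrite powR_ge0 /=; apply: powdiam_le => // x y px py i iL.
    have iS : (i < size (sg (n + m)%N))%N.
      rewrite Hsize; have := HN0 (n + m)%N; rewrite expn1 /m => h; apply: leq_trans iL (h _); lia.
    by rewrite px ?py.
  rewrite lee_fin ler_pdivrMr ?subr_gt0 //; apply: HN2; rewrite /m; lia.
Qed.

Definition sq (i : nat) : bool := has (fun j => j * j == i)%N (iota 0 i.+1).

Definition A2 : set cantor := [set x | forall i, ~~ sq i -> x i = false].

Lemma has_sq (P : pred nat) n :
  has (fun j => (j * j == n * n)%N && P j) (iota 0 (n * n).+1) = P n.
Proof.
apply/hasP/idP => [[j _ /andP[/eqP e Pj]]| Pn].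
  have -> : n = j; last by [].
  by apply/eqP; rewrite -eqn_sqr !expnS expn0 !muln1 e.
exists n; last by rewrite eqxx.
rewrite mem_iota add0n ltnS; nia.
Qed.

Lemma part2b (A : set cantor) : A = A2 -> ~ Yorioka id A.
Proof.
move=> -> [g [hg [sg [Hsize HA]]]].
have [N HN] := hg 3%N.
pose x : cantor := fun i =>
  has (fun j => (j * j == i)%N && ~~ nth false (sg j) i) (iota 0 i.+1).
have xA : A2 x.
  move=> i nsq; apply/negbTE/negP => /hasP [j ji /andP [e _]].
  by move/negP: nsq; apply; apply/hasP; exists j.
have [n mn px] := HA x xA (maxn N 2).
have hn : (n * n < size (sg n))%N.
  rewrite Hsize; have := HN n; rewrite /= => h.
  have h1 : (N <= n)%N by lia.
  have := h h1; nia.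
have := px _ hn; rewrite /x has_sq.
by case: (nth false _ _).
Qed.
Definition code {m} (f : {ffun 'I_m -> bool}) (i : nat) : bool :=
  [exists j : 'I_m, (j * j == i)%N && f j].

Definition cyl {m} (f : {ffun 'I_m -> bool}) : set cantor :=
  [set x | forall i, (i < m * m)%N -> x i = code f i].

Lemma diam_set0 (R : realType) : diam R set0 = 0%R.
Proof.
rewrite /diam (_ : [set _ | _ in _ & _ in _] = set0) ?sup0 //.
by apply/funext => z; apply/propext; split => // -[a []].
Qed.

Lemma A2_cyl m x : A2 x -> cyl [ffun j : 'I_m => x (j * j)%N] x.
Proof.
move=> Ax i im; rewrite /code; case xi: (x i).
  apply/esym/existsP.
  have : sq i by case/boolP: (sq i) => // /Ax; rewrite xi.
  move=> /hasP [j _ /eqP e].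
  have jm : (j < m)%N by apply: contraTT im; rewrite -!leqNgt -e => h; apply: leq_mul.
  by exists (Ordinal jm); rewrite /= ffunE e xi eqxx.
apply/esym/negbTE; rewrite negb_exists; apply/forallP => j; apply/negP => /andP [/eqP e].
by rewrite ffunE e xi.
Qed.

Lemma part2a (R : realType) : HDZ R A2.
Proof.
apply: HDZ_of => s s0; apply: hmeas0 => delta d0 eps e0.
have r0 : (0 < rr s)%R by rewrite /rr powR_gt0 // invr_gt0.
have r1 := @rr_lt1 R s s0.
have h20 : (0 <= (2:R)^-1)%R by rewrite invr_ge0.
have h21 : ((2:R)^-1 < 1)%R by rewrite invf_lt1 // ltr1n.
have [N1 HN1] := @small R _ _ h20 h21 d0.
have e1 : (0 < Num.min eps 1 / 2)%R by rewrite divr_gt0 // lt_min e0 ltr01.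
have [N2 HN2] := @small R _ _ (ltW r0) r1 e1.
pose m := maxn 1 (maxn N1 N2).
have m1 : (1 <= m)%N by rewrite /m leq_maxl.
have mm : (m <= m * m)%N by rewrite leq_pmulr.
pose E := enum {ffun 'I_m -> bool}.
pose f0 : {ffun 'I_m -> bool} := [ffun => false].
pose C := fun n => if (n < size E)%N then cyl (nth f0 E n) else set0.
have Cprop : forall n x y, C n x -> C n y -> forall i, (i < m * m)%N -> x i = y i.
  rewrite /C => n x y; case: ifP => // _ px py i im; by rewrite px ?py.
exists C; split; last split.
- move=> x Ax; exists (index [ffun j : 'I_m => x (j * j)%N] E) => //.
  rewrite /C index_mem mem_enum nth_index ?mem_enum //; exact: A2_cyl.
- move=> n; apply: le_trans (@diam_le R _ (m * m)%N (Cprop n)) _.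
  rewrite -(@exprVn R 2); apply: le_trans (HN1 m _); last by rewrite /m; lia.
  by apply: ler_wiXn2l => //; exact: ltW.
- have F0 : forall k, (0 <= k)%N -> 0 <= ((diam R (C k)) `^ s)%:E.
    by move=> k _; rewrite lee_fin powR_ge0.
  rewrite (nneseries_split 0 (size E) F0) add0n.
  rewrite (@eseries0 R (fun k => ((diam R (C k)) `^ s)%:E) (size E) xpredT); last first.
    move=> k kE _; rewrite /C ltnNge kE /= diam_set0 powR0 //; exact: lt0r_neq0.
  rewrite adde0.
  apply: le_trans (_ : \sum_(0 <= k < size E) (rr s ^+ (m * m))%:E <= _).
    by apply: lee_sum => k _; rewrite lee_fin; apply: powdiam_le => //; exact: Cprop.
  rewrite sumEFin lee_fin sumr_const_nat subn0 -cardT card_ffun card_bool card_ord.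
  rewrite -mulr_natr natrX exprM -exprMn.
  have q0 : (0 <= rr s ^+ m * 2)%R by rewrite mulr_ge0 // exprn_ge0 // ltW.
  have q1 : (rr s ^+ m * 2 <= Num.min eps 1)%R.
    by rewrite -ler_pdivlMr //; apply: HN2; rewrite /m; lia.
  have q2 : (rr s ^+ m * 2 <= 1)%R by apply: le_trans q1 _; rewrite ge_min lexx orbT.
  apply: le_trans (_ : rr s ^+ m * 2 <= _)%R.
    by rewrite -{2}(expr1 (rr s ^+ m * 2)); apply: ler_wiXn2l.
  by apply: le_trans q1 _; rewrite ge_min lexx.
Qed.

Theorem theorem3p7 (R : realType) :
  (forall A : set cantor, Yorioka id A -> HDZ R A) /\
  (exists A : set cantor, HDZ R A /\ ~ Yorioka id A).
Proof.
split; first exact: part1.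
by exists A2; split; [exact: part2a | exact: part2b].
Qed.
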